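(* Let $N$ be a composite number with $N=\prod_{i=1}^{a}p_i^{2n_i}\prod_{j=1}^{b}q_j^{2m_j+1}$, where $p_1,\ldots,p_a,q_1,\ldots,q_b$ are distinct primes, $n_i\geq 1$ and $m_j\geq 0$ are integers. Then $\omega(\Gamma_E(\mathbb{Z}_N))=\chi(\Gamma_E(\mathbb{Z}_N))=\prod_{i=1}^{a}(n_i+1)\prod_{j=1}^{b}(m_j+1)+b-1.$
   Context: $\mathbb{Z}_N$ is the ring of integers modulo $N$. For a finite commutative ring $R$ with unity, define $x\sim_R y$ iff $Ann(x)=Ann(y)$, with class $C_x$; the compressed zero-divisor graph $\Gamma_E(R)$ has as vertices the classes other than $C_0$ and $C_1$, with distinct $C_x,C_y$ adjacent iff $xy=0$. For $R=\mathbb{Z}_N$ the vertices of $\Gamma_E(\mathbb{Z}_N)$ correspond to the proper divisors $d$ of $N$ ($1<d<N$), two distinct ones $d,d'$ being adjacent iff $N\mid dd'$. $\omega$ is the clique number and $\chi$ the chromatic number. *)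

(* Defs.v *)
From mathcomp Require Import all_boot.
Set Implicit Arguments. Unset Strict Implicit. Unset Printing Implicit Defensive.

(* A finite simple graph is given by a vertex set V : {set T} on a finType T
   and an adjacency relation e (only its restriction to distinct vertices of V
   matters). *)
Section Graphs.
Variables (T : finType) (V : {set T}) (e : rel T).

Definition is_clique (K : {set T}) : bool :=
  (K \subset V) && [forall u in K, forall v in K, (u != v) ==> e u v].

Definition clique_number : nat := \max_(K : {set T} | is_clique K) #|K|.

Definition colorable (k : nat) : bool :=
  [exists f : {ffun T -> 'I_k},
     [forall u in V, forall v in V, ((u != v) && e u v) ==> (f u != f v)]].

Lemma colorable_card : colorable #|T|.
Proof.
apply/existsP; exists [ffun x => enum_rank x].
apply/forallP => u; apply/implyP => _; apply/forallP => v; apply/implyP => _.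
apply/implyP => /andP [uv _]; rewrite !ffunE.
by apply: contra uv => /eqP /enum_rank_inj ->.
Qed.

Lemma colorable_ex : exists k, colorable k.
Proof. by exists #|T|; exact: colorable_card. Qed.

Definition chromatic_number : nat := ex_minn colorable_ex.

End Graphs.

(* Gamma_E(Z_N): vertices = proper divisors d of N with 1 < d < N,
   distinct d, d' adjacent iff N %| d * d'.  Vertices are encoded in 'I_N.+1. *)
Definition ZE_vertices (N : nat) : {set 'I_N.+1} :=
  [set d : 'I_N.+1 | [&& 1 < d, d < N & d %| N]].

Definition ZE_adj (N : nat) : rel 'I_N.+1 :=
  fun d d' => N %| (d * d').

Definition omega_ZE (N : nat) : nat :=
  clique_number (ZE_vertices N) (@ZE_adj N).

Definition chi_ZE (N : nat) : nat :=
  chromatic_number (ZE_vertices N) (@ZE_adj N).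

(* Main.v *)
Require Import Defs.
From mathcomp Require Import all_boot.
From mathcomp Require Import zify.
Set Implicit Arguments. Unset Strict Implicit. Unset Printing Implicit Defensive.

Lemma half2 n : (2*n)./2 = n. Proof. by rewrite mul2n doubleK. Qed.
Lemma half21 n : (2*n+1)./2 = n. Proof. by rewrite addn1 mul2n /= uphalf_double. Qed.
Lemma logn_np s m : ~~ prime s -> logn s m = 0.
Proof. by rewrite lognE => /negbTE ->. Qed.

Section Prod.
Variables (I : finType) (R : I -> nat).
Hypothesis Rp : forall z, prime (R z).
Hypothesis Ri : injective R.

Lemma logn_prodR (x : I -> nat) s : prime s ->
  logn s (\prod_z R z ^ x z) = \sum_z (s == R z) * x z.
Proof.
move=> ps.
apply: (proj2 (big_ind2 (fun A B => 0 < A /\ logn s A = B) _ _ _)) => //.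
- by rewrite logn1.
- move=> A1 B1 A2 B2 [A10 <-] [A20 <-]; split; first by rewrite muln_gt0 A10.
  by rewrite lognM.
- move=> z _; split; first by rewrite expn_gt0 prime_gt0.
  by rewrite lognX logn_prime // mulnC.
Qed.

Lemma logn_prodR_in (x : I -> nat) z0 :
  logn (R z0) (\prod_z R z ^ x z) = x z0.
Proof.
rewrite logn_prodR // (bigD1 z0) //= eqxx mul1n big1 ?addn0 // => z zz0.
by rewrite (inj_eq Ri) eq_sym (negbTE zz0).
Qed.

Lemma logn_prodR_out (x : I -> nat) s : (forall z, s != R z) ->
  logn s (\prod_z R z ^ x z) = 0.
Proof.
move=> ns; case ps : (prime s); last by rewrite logn_np ?ps.
by rewrite logn_prodR // big1 // => z _; rewrite (negbTE (ns z)).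
Qed.

Lemma prodR_gt0 (x : I -> nat) : 0 < \prod_z R z ^ x z.
Proof. by rewrite prodn_gt0 // => z; rewrite expn_gt0 prime_gt0. Qed.

Lemma prodR_dvd (x y : I -> nat) : (forall z, x z <= y z) ->
  \prod_z R z ^ x z %| \prod_z R z ^ y z.
Proof.
move=> le; apply: (big_ind2 (fun A B => A %| B)) => //.
- by move=> ? ? ? ? ? ?; apply: dvdn_mul.
- by move=> z _; apply: dvdn_exp2l.
Qed.
End Prod.

Section G.
Variables (T : finType) (V : {set T}) (e : rel T).

Lemma clique_le_col (K : {set T}) k : is_clique V e K -> colorable V e k -> #|K| <= k.
Proof.
case/andP=> KV /forallP cl /existsP[f /forallP pf].
have inj : {in K &, injective f}.
  move=> u v uK vK fuv; apply/eqP; apply/negPn/negP => uv.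
  have := cl u; rewrite uK /= => /forallP/(_ v); rewrite vK uv /= => euv.
  have := pf u; rewrite (subsetP KV _ uK) /= => /forallP/(_ v).
  by rewrite (subsetP KV _ vK) uv euv fuv eqxx.
by rewrite -(card_in_imset inj); apply: leq_trans (max_card _) _; rewrite card_ord.
Qed.

Lemma omega_le_chi : clique_number V e <= chromatic_number V e.
Proof.
apply/bigmax_leqP => K cK; rewrite /chromatic_number.
by case: ex_minnP => k ck _; exact: clique_le_col.
Qed.

Lemma chi_le k : colorable V e k -> chromatic_number V e <= k.
Proof. by rewrite /chromatic_number; case: ex_minnP => m _ H /H. Qed.

Lemma omega_ge K : is_clique V e K -> #|K| <= clique_number V e.
Proof. by move=> cK; apply: (leq_bigmax_cond (P := is_clique V e)). Qed.

Lemma colorable_map (K : {set T}) (f : T -> T) x0 (x0K : x0 \in K) :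
  (forall u, u \in V -> f u \in K) ->
  (forall u v, u \in V -> v \in V -> u != v -> e u v -> f u != f v) ->
  colorable V e #|K|.
Proof.
move=> fK fp; apply/existsP; exists [ffun u => enum_rank_in x0K (f u)].
apply/forallP => u; apply/implyP => uV; apply/forallP => v; apply/implyP => vV.
apply/implyP => /andP[uv euv]; rewrite !ffunE.
apply: contra (fp u v uV vV uv euv) => /eqP H.
by rewrite -(enum_rankK_in x0K (fK _ uV)) H enum_rankK_in ?fK.
Qed.
End G.

Lemma dvd_logP m n : 0 < m -> 0 < n ->
  (forall s, prime s -> logn s m <= logn s n) -> m %| n.
Proof.
move=> m0 n0 H; apply/(dvdn_partP _ m0) => s; rewrite mem_primes => /and3P[ps _ _].
by rewrite p_part pfactor_dvdn //; exact: H.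
Qed.

Section Gen.
Variable N : nat.
Hypothesis N_gt1 : 1 < N.
Hypothesis N_np : ~~ prime N.

Lemma N_gt0 : 0 < N. Proof. exact: ltnW. Qed.

Lemma adjP u v : 0 < u -> 0 < v ->
  (N %| u * v) <-> (forall s, prime s -> logn s N <= logn s u + logn s v).
Proof.
move=> u0 v0; split.
  by move=> H s ps; rewrite -lognM //; apply: dvdn_leq_log => //; rewrite muln_gt0 u0.
by move=> H; apply: dvd_logP => [||s ps]; rewrite ?muln_gt0 ?u0 ?N_gt0 // lognM // H.
Qed.

Lemma vertP (u : 'I_N.+1) : u \in ZE_vertices N -> [/\ 0 < u, 1 < u, u < N & u %| N].
Proof. by rewrite inE => /and3P[a b c]; split => //; exact: ltnW. Qed.

Definition kk r := logn r N - (logn r N)./2.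
Definition cst r := N %/ r ^ kk r.

Lemma half_facts n : n = odd n + (n./2).*2.
Proof. by rewrite odd_double_half. Qed.

Lemma logn_cst r s : prime r -> prime s -> 0 < logn r N ->
  logn s (cst r) = if s == r then (logn r N)./2 else logn s N.
Proof.
move=> pr ps E0.
have kle : kk r <= logn r N by rewrite /kk; lia.
rewrite /cst logn_div; last by rewrite pfactor_dvdn // N_gt0.
rewrite lognX (logn_prime _ pr).
case: eqP => [->|_] /=; last by rewrite muln0 subn0.
rewrite muln1 /kk; have := half_facts (logn r N); lia.
Qed.

Lemma kk_gt0 r : 0 < logn r N -> 0 < kk r.
Proof. by rewrite /kk; have := half_facts (logn r N); lia. Qed.

Lemma cstK r : prime r -> cst r * r ^ kk r = N.
Proof.
move=> pr; rewrite /cst divnK // pfactor_dvdn ?N_gt0 //.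
by rewrite /kk leq_subr.
Qed.

Lemma cst_facts r : prime r -> 0 < logn r N ->
  [/\ 0 < cst r, 1 < cst r, cst r < N & cst r %| N].
Proof.
move=> pr E0; have K := cstK pr.
have c0 : 0 < cst r by move: N_gt0; rewrite -K muln_gt0 => /andP[].
have rk : 1 < r ^ kk r.
  by rewrite -(exp1n (kk r)) ltn_exp2r ?kk_gt0 // prime_gt1.
split => //.
- rewrite ltn_neqAle c0 andbT; apply/negP => /eqP c1.
  move: K; rewrite -c1 mul1n => Nr.
  have : logn r N = kk r by rewrite -Nr pfactorK.
  rewrite /kk => H.
  have E1 : logn r N = 1 by have := half_facts (logn r N); lia.
  have k1 : kk r = 1 by rewrite /kk -H E1.
  by move: N_np; rewrite -Nr k1 expn1 pr.
- by rewrite -[X in _ < X]K ltn_Pmulr.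
- by rewrite -[X in _ %| X]K dvdn_mulr.
Qed.

Definition bigv (u : nat) := N %| u * u.
Definition defp (u : nat) : pred 'I_N.+1 :=
  fun r => prime r && (2 * logn r u < logn r N).
Definition fcol (u : 'I_N.+1) : 'I_N.+1 :=
  if bigv u then u else if [pick r | defp u r] is Some r then inord (cst r) else u.

Lemma bigvP u : 0 < u -> bigv u <-> (forall s, prime s -> logn s N <= 2 * logn s u).
Proof.
move=> u0; rewrite /bigv adjP //; split => H s ps; have := H s ps; lia.
Qed.

Lemma fcol_wit (u : 'I_N.+1) : u \in ZE_vertices N ->
  (bigv u /\ fcol u = u) \/
  (exists r, [/\ prime r, 0 < logn r N, 2 * logn r u < logn r N & val (fcol u) = cst r]).
Proof.
case/vertP => u0 u1 uN udN; rewrite /fcol.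
case: ifP => bu; first by left.
right; case: pickP => [r /andP[pr dr] | H].
  have E0 : 0 < logn r N by lia.
  exists r; split => //=; rewrite inordK // ltnS; case: (cst_facts pr E0) => _ _ /ltnW //.
exfalso; move: bu => /negP; apply; apply/bigvP => // s ps.
have [sN|Ns] := leqP s N.
  have := H (inord s); rewrite /defp inordK ?ltnS // ps /=; lia.
by rewrite ltn_log0.
Qed.

Lemma fcol_proper (u v : 'I_N.+1) : u \in ZE_vertices N -> v \in ZE_vertices N ->
  u != v -> ZE_adj u v -> fcol u != fcol v.
Proof.
move=> uV vV uv; rewrite /ZE_adj.
have [u0 _ _ _] := vertP uV; have [v0 _ _ _] := vertP vV.
move/(adjP u0 v0) => adj.
apply/negP => /eqP fe.
case: (fcol_wit uV) => [[bu fu] | [r [pr E0 dr fu]]];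
case: (fcol_wit vV) => [[bv fv] | [r' [pr' E0' dr' fv]]].
- by move: uv; rewrite -fu -fv fe eqxx.
- have := adj r' pr'; rewrite -fu fe fv logn_cst // eqxx.
  have := half_facts (logn r' N); lia.
- have := adj r pr; rewrite -fv -fe fu logn_cst // eqxx.
  have := half_facts (logn r N); lia.
- have rr : r = r'.
    apply/eqP; apply/negP => /negP ne.
    have : logn r (cst r) = logn r (cst r') by rewrite -fu -fv fe.
    rewrite !logn_cst // eqxx (negbTE ne).
    have := half_facts (logn r N); lia.
  subst r'; have := adj r pr; lia.
Qed.

Definition Bset := [set d in ZE_vertices N | bigv d].
Definition Rodd := [set r : 'I_N.+1 | prime r && odd (logn r N)].
Definition Cset := [set (inord (cst (nat_of_ord r)) : 'I_N.+1) | r : 'I_N.+1 in Rodd].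
Definition K0 := Bset :|: Cset.

Lemma cst_vert r : prime r -> 0 < logn r N -> (inord (cst r) : 'I_N.+1) \in ZE_vertices N.
Proof.
move=> pr E0; case: (cst_facts pr E0) => c0 c1 cN cd.
rewrite inE inordK; last by rewrite ltnS ltnW.
by rewrite c1 cN cd.
Qed.

Lemma CsetP x : x \in Cset ->
  [/\ x \in ZE_vertices N & exists r, [/\ prime r, odd (logn r N) & val x = cst r]].
Proof.
case/imsetP => r; rewrite inE => /andP[pr oE] -> {x}.
have E0 : 0 < logn r N by move: oE; case: (logn r N).
split; first exact: cst_vert.
exists r; split => //=; rewrite inordK // ltnS; case: (cst_facts pr E0) => _ _ /ltnW //.
Qed.

Lemma C_notbig x : x \in Cset -> ~~ bigv x.
Proof.
case/CsetP => xV [r [pr oE xc]]; have [x0 _ _ _] := vertP xV.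
apply/negP => /(bigvP x0)/(_ r pr); rewrite xc logn_cst ?eqxx //; last by move: oE; case: (logn r N).
have := half_facts (logn r N); rewrite oE; lia.
Qed.

Lemma fcol_in u : u \in ZE_vertices N -> fcol u \in K0.
Proof.
move=> uV; rewrite inE; case: (fcol_wit uV) => [[bu ->] | [r [pr E0 dr fu]]].
  by rewrite inE uV bu.
have fe : fcol u = inord (cst r).
  by apply: val_inj; rewrite /= fu inordK // ltnS; case: (cst_facts pr E0) => _ _ /ltnW.
case oE : (odd (logn r N)).
  apply/orP; right; rewrite fe; apply/imsetP; exists (inord r).
    by rewrite inE inordK ?pr ?oE // ltnS; apply: dvdn_leq N_gt0 _; move: E0; rewrite logn_gt0 mem_primes => /and3P[].
  by rewrite inordK // ltnS; apply: dvdn_leq N_gt0 _; move: E0; rewrite logn_gt0 mem_primes => /and3P[].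
apply/orP; left; rewrite inE fe cst_vert //=.
have [c0 _ _ _] := cst_facts pr E0.
rewrite inordK; last by rewrite ltnS ltnW //; case: (cst_facts pr E0).
apply/bigvP => // s ps; rewrite logn_cst //; case: eqP => [->|_]; last by lia.
have := half_facts (logn r N); rewrite oE; lia.
Qed.

Lemma K0_clique : is_clique (ZE_vertices N) (@ZE_adj N) K0.
Proof.
have KV : K0 \subset ZE_vertices N.
  apply/subsetP => x; rewrite inE => /orP[|/CsetP[]//].
  by rewrite inE => /andP[].
have K0P x : x \in K0 -> 0 < x /\ forall s, prime s ->
    (logn s N <= 2 * logn s x) \/ exists r, [/\ prime r, odd (logn r N) & val x = cst r].
  move=> xK; have [x0 _ _ _] := vertP (subsetP KV _ xK); split => // s ps.
  move: xK; rewrite inE => /orP[|/CsetP[_ ex]]; last by right.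
  by rewrite inE => /andP[_ /(bigvP x0) H]; left; exact: H.
rewrite /is_clique KV /=; apply/forallP => x; apply/implyP => xK.
apply/forallP => y; apply/implyP => yK; apply/implyP => xy.
have [x0 Hx] := K0P x xK; have [y0 Hy] := K0P y yK.
rewrite /ZE_adj; apply/(adjP x0 y0) => s ps.
case: (Hx s ps) => [hx | [r [pr oE xc]]]; case: (Hy s ps) => [hy | [r' [pr' oE' yc]]].
- lia.
- have E0 : 0 < logn r' N by move: oE'; case: (logn r' N).
  rewrite yc logn_cst //; have [es|ne] := eqVneq s r'; last by lia.
  subst s; move: hx; have := half_facts (logn r' N); rewrite oE'; lia.
- have E0 : 0 < logn r N by move: oE; case: (logn r N).
  rewrite xc logn_cst //; have [es|ne] := eqVneq s r; last by lia.
  subst s; move: hy; have := half_facts (logn r N); rewrite oE; lia.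
- have E0 : 0 < logn r N by move: oE; case: (logn r N).
  have E0' : 0 < logn r' N by move: oE'; case: (logn r' N).
  rewrite xc yc !logn_cst //.
  have [->|ne] := eqVneq s r.
    have [rr|ne'] := eqVneq r r'.
      by move: xy; rewrite (_ : x = y) ?eqxx //; apply: val_inj; rewrite xc yc rr.
    by lia.
  by lia.
Qed.
End Gen.

Section Conc.
Variables (N a b : nat) (p n : 'I_a -> nat) (q m : 'I_b -> nat).
Hypotheses (N_gt1 : 1 < N) (N_np : ~~ prime N)
  (pp : forall i, prime (p i)) (qp : forall j, prime (q j))
  (pi : injective p) (qi : injective q) (pq : forall i j, p i != q j)
  (n1 : forall i, 1 <= n i)
  (HN : N = (\prod_(i < a) p i ^ (2 * n i)) * (\prod_(j < b) q j ^ (2 * m j + 1))).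

Definition I := ('I_a + 'I_b)%type.
Definition R (z : I) := match z with inl i => p i | inr j => q j end.
Definition X (z : I) := match z with inl i => 2 * n i | inr j => 2 * m j + 1 end.

Lemma Rp z : prime (R z). Proof. by case: z. Qed.
Lemma Ri : injective R.
Proof.
case=> [i|j] [i'|j'] /= e.
- by rewrite (pi e).
- by move: (pq i j'); rewrite e eqxx.
- by move: (pq i' j); rewrite e eqxx.
- by rewrite (qi e).
Qed.

Lemma NR : N = \prod_z R z ^ X z.
Proof. by rewrite HN big_sumType. Qed.

Lemma EX z : logn (R z) N = X z.
Proof. by rewrite NR (logn_prodR_in Rp Ri). Qed.

Lemma Eout s : (forall z, s != R z) -> logn s N = 0.
Proof. by move=> ns; rewrite NR (logn_prodR_out Rp). Qed.

Lemma prime_of s : 0 < logn s N -> exists z, s = R z.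
Proof.
move=> E0; case: (pickP (fun z => s == R z)) => [z /eqP e | H]; first by exists z.
by move: E0; rewrite Eout // => z; rewrite H.
Qed.

Lemma R_le z : R z <= N.
Proof.
apply: dvdn_leq; first by apply: ltnW.
have : 0 < logn (R z) N by rewrite EX; case: z => [i|j] /=; [have := n1 i|]; lia.
by rewrite logn_gt0 mem_primes => /and3P[].
Qed.

Lemma E_pos z : 0 < logn (R z) N.
Proof. by rewrite EX; case: z => [i|j] /=; [have := n1 i|]; lia. Qed.

Lemma Rodd_img : Rodd N = [set (inord (q j) : 'I_N.+1) | j : 'I_b].
Proof.
apply/setP => r; rewrite inE; apply/andP/imsetP => [[pr oE]|[j _ ->]].
  have E0 : 0 < logn r N by move: oE; case: (logn r N).
  case: (prime_of E0) => [[i|j] /= rR].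
    by move: oE; rewrite rR (EX (inl i)) /= oddM.
  by exists j; last by apply: val_inj; rewrite /= inordK ?ltnS ?rR //; exact: (R_le (inr j)).
have qN := R_le (inr j).
rewrite inordK ?ltnS //; split; first exact: qp.
by rewrite (EX (inr j)) /= addn1 /= oddM.
Qed.

Lemma card_Rodd : #|Rodd N| = b.
Proof.
rewrite Rodd_img card_imset ?card_ord // => j j' /(congr1 val) /=.
rewrite !inordK ?ltnS; [exact: qi | exact: (R_le (inr j')) | exact: (R_le (inr j))].
Qed.

Lemma card_Cset : #|Cset N| = b.
Proof.
rewrite -card_Rodd /Cset card_in_imset // => r r'.
rewrite !inE => /andP[pr oE] /andP[pr' oE'] /(congr1 val) /=.
have E0 : 0 < logn r N by move: oE; case: (logn r N).
have E0' : 0 < logn r' N by move: oE'; case: (logn r' N).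
have [_ _ c1 _] := cst_facts N_gt1 N_np pr E0.
have [_ _ c1' _] := cst_facts N_gt1 N_np pr' E0'.
rewrite !inordK ?ltnS ?(ltnW c1) ?(ltnW c1') // => ce.
apply/val_inj/eqP; apply/negP => /negP ne.
have := congr1 (logn r) ce; rewrite !(logn_cst N_gt1 N_np) // eqxx (negbTE ne).
have := half_facts (logn r N); lia.
Qed.

Definition P := (\prod_(i < a) (n i + 1)) * (\prod_(j < b) (m j + 1)).
Definition Y := {dffun forall z : I, 'I_((X z)./2).+1}.
Definition gv (e : Y) : nat := \prod_z R z ^ (X z - (X z)./2 + e z).
Definition g (e : Y) : 'I_N.+1 := inord (gv e).
Definition B' := [set d : 'I_N.+1 | (d %| N) && bigv N d].

Lemma card_Y : #|Y| = P.
Proof.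
rewrite /Y card_dep_ffun foldrE /image_mem big_map big_enum /= big_sumType /P.
congr (_ * _); apply: eq_bigr => i _; rewrite card_ord /=.
  by rewrite half2 addn1.
by rewrite half21 addn1.
Qed.

Lemma gv_dvd e : gv e %| N.
Proof.
rewrite NR; apply: prodR_dvd => z; have := ltn_ord (e z); have := half_facts (X z); lia.
Qed.

Lemma gv_le e : gv e <= N.
Proof. by apply: dvdn_leq (gv_dvd e); apply: ltnW. Qed.

Lemma logn_gv e z : logn (R z) (gv e) = X z - (X z)./2 + e z.
Proof. exact: (logn_prodR_in Rp Ri). Qed.

Lemma g_inj : injective g.
Proof.
move=> e e' /(congr1 val); rewrite /g /= !inordK ?ltnS ?gv_le // => ge.
apply/ffunP => z; apply/val_inj; have := congr1 (logn (R z)) ge.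
by rewrite !logn_gv => /eqP; rewrite eqn_add2l => /eqP.
Qed.

Lemma B'_img : B' = [set g e | e : Y].
Proof.
apply/setP => d; rewrite inE; apply/andP/imsetP => [[dN bd]|[e _ ->]].
  have d0 : 0 < d by apply: dvdn_gt0 dN; apply: ltnW.
  have Hb := proj1 (bigvP N_gt1 N_np d0) bd.
  pose e : Y := [ffun z => inord (logn (R z) d - (X z - (X z)./2))].
  exists e => //; apply: val_inj; rewrite /g /= inordK ?ltnS ?gv_le //.
  apply: eqn_from_log => //; first exact: (prodR_gt0 Rp).
  move=> s; case ps : (prime s); last by rewrite !logn_np ?ps.
  case: (pickP (fun z => s == R z)) => [z /eqP -> | H].
    rewrite logn_gv ffunE /= inordK.
      have := Hb _ (Rp z); rewrite EX; lia.
    have := dvdn_leq_log (R z) (ltnW N_gt1) dN; rewrite EX.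
    have := half_facts (X z); lia.
  rewrite (logn_prodR_out Rp); last by move=> z; rewrite H.
  have := dvdn_leq_log s (ltnW N_gt1) dN; rewrite Eout //; last by move=> z; rewrite H.
  lia.
rewrite /g inordK ?ltnS ?gv_le //; split; first exact: gv_dvd.
apply/(bigvP N_gt1 N_np); first exact: (prodR_gt0 Rp).
move=> s ps; case: (pickP (fun z => s == R z)) => [z /eqP -> | H].
  rewrite logn_gv EX; have := half_facts (X z); lia.
by rewrite Eout // => z; rewrite H.
Qed.

Lemma card_B' : #|B'| = P.
Proof. by rewrite B'_img card_imset; [exact: card_Y | exact: g_inj]. Qed.

Lemma B'_split : B' = (inord N : 'I_N.+1) |: Bset N.
Proof.
apply/setP => d; rewrite !inE.
have NN : val (inord N : 'I_N.+1) = N by rewrite /= inordK.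
apply/andP/orP => [[dN bd]|[/eqP ->|/andP[dV bd]]].
- have [eN|neN] := eqVneq (val d) N.
    by left; apply/eqP/val_inj; rewrite NN.
  right; rewrite bd andbT dN andbT.
  have d0 : 0 < d by apply: dvdn_gt0 dN; apply: ltnW.
  have dle := dvdn_leq (ltnW N_gt1) dN.
  have -> : d < N by rewrite ltn_neqAle dle andbT; exact: neN.
  rewrite andbT ltn_neqAle d0 andbT; apply/negP => /eqP d1.
  by move: bd; rewrite /bigv -d1 muln1 dvdn1 => /eqP N1; move: N_gt1; rewrite N1.
- by rewrite NN dvdnn /bigv dvdn_mulr.
- by split => //; case/and3P: dV.
Qed.

Lemma card_Bset : #|Bset N| = P - 1.
Proof.
have : #|B'| = #|Bset N| + 1.
  rewrite B'_split cardsU1 addnC; congr (_ + _).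
  suff -> : (inord N : 'I_N.+1) \notin Bset N by [].
  by rewrite inE inE inordK // ltnn /= andbF.
by rewrite card_B' => ->; rewrite addnK.
Qed.

Lemma P_gt0 : 0 < P.
Proof. by rewrite -card_B' B'_split; apply/card_gt0P; exists (inord N); rewrite setU11. Qed.

Lemma card_K0 : #|K0 N| = P + b - 1.
Proof.
rewrite /K0 cardsU card_Bset card_Cset.
have -> : Bset N :&: Cset N = set0.
  apply/setP => x; rewrite !inE; apply/negP => /andP[/andP[_ bx] xC].
  by move: (C_notbig N_gt1 N_np xC); rewrite bx.
by rewrite cards0 subn0; have := P_gt0; lia.
Qed.

Lemma main_res : omega_ZE N = P + b - 1 /\ chi_ZE N = P + b - 1.
Proof.
have cK := K0_clique N_gt1 N_np.
have pdV : (inord (pdiv N) : 'I_N.+1) \in ZE_vertices N.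
  have pdN := pdiv_dvd N; have pdp := pdiv_prime N_gt1.
  have pdle := dvdn_leq (ltnW N_gt1) pdN.
  rewrite inE inordK ?ltnS // prime_gt1 //= pdN andbT ltn_neqAle pdle andbT.
  by apply/eqP => e; move: N_np; rewrite -e pdp.
have x0K := fcol_in N_gt1 N_np pdV.
have col : colorable (ZE_vertices N) (@ZE_adj N) #|K0 N|.
  apply: (colorable_map x0K); first exact: fcol_in.
  exact: fcol_proper.
have h1 := omega_ge cK.
have h2 := omega_le_chi (ZE_vertices N) (@ZE_adj N).
have h3 := chi_le col.
rewrite /omega_ZE /chi_ZE -card_K0; lia.
Qed.
End Conc.

Theorem lemma5p1 (N a b : nat) (p n : 'I_a -> nat) (q m : 'I_b -> nat) :
  1 < N -> ~~ prime N ->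
  (forall i, prime (p i)) -> (forall j, prime (q j)) ->
  injective p -> injective q -> (forall i j, p i != q j) ->
  (forall i, 1 <= n i) ->
  N = (\prod_(i < a) p i ^ (2 * n i)) * (\prod_(j < b) q j ^ (2 * m j + 1)) ->
  omega_ZE N = (\prod_(i < a) (n i + 1)) * (\prod_(j < b) (m j + 1)) + b - 1 /\
  chi_ZE N = (\prod_(i < a) (n i + 1)) * (\prod_(j < b) (m j + 1)) + b - 1.
Proof.
move=> H1 H2 H3 H4 H5 H6 H7 H8 H9.
exact: (main_res H1 H2 H3 H4 H5 H6 H7 H8 H9).
Qed.
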